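(* Assume $X_0\in L^\infty$ and $x\in\mathbb{R}$. Then $X^*$ is beating-performance-variance (BPV) efficient in $\mathscr{X}(x)$ if and only if $X^*$ is variance-minimal in $\mathscr{X}_{\mathrm{icx}}(x,X_0+z)$ for some $z\ge \frac{x}{\mathrm{E}[\rho]}-Q_0(1)$.
   Context: $(\Omega,\mathcal{F},\mathbb{P})$ is a complete nonatomic probability space. $\rho\in L^2$ with $\mathbb{P}(\rho>0)=1$ and $\mathrm{Var}[\rho]>0$. For a random variable $X$, $Q_X(t)=\inf\{y:\mathbb{P}(X\le y)>t\}$ for $t\in[0,1)$, $Q_X(1):=\lim_{t\uparrow1}Q_X(t)$; $Q_0:=Q_{X_0}$. For random variables $X,Y$, $X\succeq_{\mathrm{icx}}Y$ means $\mathrm{E}[f(X)]\ge\mathrm{E}[f(Y)]$ for all increasing convex $f$ (equivalently $\int_t^1Q_X\ge\int_t^1Q_Y$ for all $t\in[0,1]$). $\mathscr{X}(x)=\{X\in L^2:\mathrm{E}[\rho X]\le x\}$; $\mathscr{X}_{\mathrm{icx}}(x,Y_0)=\{X\in L^2:\mathrm{E}[\rho X]\le x,\ X\succeq_{\mathrm{icx}}Y_0\}$, and $X$ is variance-minimal in it if it minimizes $\mathrm{Var}[X]$ over it. The beating performance of $X\in L^2$ is $\psi(X)=\sup\{m\in\mathbb{R}: X-m\succeq_{\mathrm{icx}}X_0\}$ (with $\sup\emptyset=-\infty$). $X\in\mathscr{X}(x)$ is BPV efficient in $\mathscr{X}(x)$ if there is no $Y\in\mathscr{X}(x)$ with $\psi(Y)\ge\psi(X)$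 and $\mathrm{Var}[Y]\le\mathrm{Var}[X]$ with at least one inequality strict. *)

(* Defs.v *)
From HB Require Import structures.
From mathcomp Require Import all_boot all_order all_algebra.
From mathcomp Require Import all_classical all_reals all_analysis.
Set Implicit Arguments. Unset Strict Implicit. Unset Printing Implicit Defensive.
Import Order.TTheory GRing.Theory Num.Theory.
Import numFieldNormedType.Exports.
Local Open Scope classical_set_scope.
Local Open Scope ring_scope.

Section defs.
Context {R : realType} {d : measure_display} {T : measurableType d}.
Variable P : probability T R.

Definition nonatomic : Prop :=
  forall A : set T, measurable A -> (0 < P A)%E ->
    exists B : set T, [/\ measurable B, B `<=` A, (0 < P B)%E & (P B < P A)%E].

Definition L2 (X : T -> R) : Prop :=
  measurable_fun setT X /\ P.-integrable setT (fun w => (X w ^+ 2)%:E).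

Definition Linfty (X : T -> R) : Prop :=
  measurable_fun setT X /\ exists M : R, {ae P, forall w, `|X w| <= M}.

Definition quantile (X : T -> R) (t : R) : R :=
  inf [set y : R | (t%:E < P [set w | (X w <= y)%R])%E].

(* Q_X(1) := lim_{t -> 1^-} Q_X(t) *)
Definition quantile1 (X : T -> R) : R :=
  lim (quantile X t @[t --> (1:R)^'-]).

Definition increasing_convex (f : R -> R) : Prop :=
  (forall u v, u <= v -> f u <= f v) /\
  (forall u v (l : R), 0 <= l <= 1 ->
     f (l * u + (1 - l) * v) <= l * f u + (1 - l) * f v).

Definition icx_ge (X Y : T -> R) : Prop :=
  forall f : R -> R, increasing_convex f ->
    ('E_P[f \o Y] <= 'E_P[f \o X])%E.

Definition budget (rho : T -> R) (x : R) : set (T -> R) :=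
  [set X | L2 X /\ ('E_P[rho \* X] <= x%:E)%E].

Definition budget_icx (rho : T -> R) (x : R) (Y0 : T -> R) : set (T -> R) :=
  [set X | L2 X /\ ('E_P[rho \* X] <= x%:E)%E /\ icx_ge X Y0].

Definition variance_minimal (S : set (T -> R)) (X : T -> R) : Prop :=
  S X /\ forall Y, S Y -> ('V_P[X] <= 'V_P[Y])%E.

(* beating performance psi(X) = sup {m : X - m >=_icx X0}, sup of empty = -oo *)
Definition beating_perf (X0 X : T -> R) : \bar R :=
  ereal_sup [set m%:E | m in [set m : R | icx_ge (X \- cst m) X0]].

Definition BPV_efficient (rho : T -> R) (x : R) (X0 X : T -> R) : Prop :=
  budget rho x X /\
  ~ exists Y, [/\ budget rho x Y,
      (beating_perf X0 X <= beating_perf X0 Y)%E,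
      ('V_P[Y] <= 'V_P[X])%E &
      ((beating_perf X0 X < beating_perf X0 Y)%E \/ ('V_P[Y] < 'V_P[X])%E)].

End defs.

(* Main.v *)
Require Import Defs.
From HB Require Import structures.
From mathcomp Require Import all_boot all_order all_algebra.
From mathcomp Require Import all_classical all_reals all_analysis.
From mathcomp Require Import measurable_realfun.
From mathcomp Require Import ring lra.
Import Order.TTheory GRing.Theory Num.Theory.
Import numFieldNormedType.Exports.
Local Open Scope classical_set_scope.
Local Open Scope ring_scope.

Section convex_facts.
Context {R : realType}.
Implicit Types f : R -> R.

Lemma ic_nd f : increasing_convex f -> forall u v, u <= v -> f u <= f v.
Proof. by case. Qed.

Lemma ic_meas f : increasing_convex f -> measurable_fun setT f.
Proof. by move=> [nd _]; apply: measurable_realfun.nondecreasing_measurable => // u v uv; exact: nd. Qed.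

Lemma ic_comp f a b : increasing_convex f -> 0 <= a ->
  increasing_convex (fun u => f (a * u + b)).
Proof.
move=> [nd cv] a0; split.
  by move=> u v uv; apply: nd; rewrite lerD2r ler_wpM2l.
move=> u v l l01.
have -> : a * (l * u + (1 - l) * v) + b = l * (a * u + b) + (1 - l) * (a * v + b).
  by rewrite mulrDr !mulrDl !mulrA ![a * _]mulrC -!mulrA; ring.
exact: cv.
Qed.

Lemma cvx_left f u dl : increasing_convex f -> 0 < dl ->
  f u <= f (u - dl) + dl * (f (u + 1) - f u).
Proof.
move=> [_ cv] d0.
have d1 : 0 < 1 + dl by apply: addr_gt0.
pose l := (1 + dl)^-1.
have l01 : 0 <= l <= 1.
  apply/andP; split; first by rewrite /l invr_ge0 ltW.
  by rewrite /l invf_le1// lerDl ltW.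
have := cv (u - dl) (u + 1) l l01.
have -> : l * (u - dl) + (1 - l) * (u + 1) = u.
  rewrite /l; field; by rewrite gt_eqF.
move=> h.
have : (1 + dl) * f u <= (1 + dl) * (l * f (u - dl) + (1 - l) * f (u + 1)).
  by rewrite ler_wpM2l// ltW.
have -> : (1 + dl) * (l * f (u - dl) + (1 - l) * f (u + 1)) =
          f (u - dl) + dl * f (u + 1).
  rewrite /l; field; by rewrite gt_eqF.
move=> h2.
rewrite mulrBr addrA lerBrDr.
by move: h2; rewrite mulrDl mul1r [dl * f u]mulrC.
Qed.

Lemma cvx_right f u e : increasing_convex f -> 0 <= e <= 1 ->
  f (u + e) <= f u + e * (f (u + 1) - f u).
Proof.
move=> [_ cv] /andP[e0 e1].
have l01 : 0 <= 1 - e <= 1 by rewrite subr_ge0 e1 /= lerBlDr lerDl.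
have := cv u (u + 1) (1 - e) l01.
have -> : (1 - e) * u + (1 - (1 - e)) * (u + 1) = u + e by ring.
move=> h; apply: (le_trans h); rewrite le_eqVlt; apply/orP; left; apply/eqP; ring.
Qed.

Lemma cvx_lower f M v : increasing_convex f ->
  f M + (f M - f (M - 1)) * (v - M) - (f M - f (M - 1)) <= f v.
Proof.
move=> [nd cv].
set s := f M - f (M - 1).
have s0 : 0 <= s by rewrite subr_ge0 nd// lerBlDr lerDl.
have [vM|Mv] := leP M v.
  have d1 : 0 < v - M + 1 by rewrite ltr_wpDl// subr_ge0.
  pose l := (v - M) / (v - M + 1).
  have l01 : 0 <= l <= 1.
    apply/andP; split; first by apply: divr_ge0; [rewrite subr_ge0 | exact: ltW].
    by rewrite /l ler_pdivrMr// mul1r lerDl.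
  have := cv (M - 1) v l l01.
  have -> : l * (M - 1) + (1 - l) * v = M.
    rewrite /l; field; by rewrite gt_eqF.
  move=> h.
  have : (v - M + 1) * f M <= (v - M + 1) * (l * f (M - 1) + (1 - l) * f v).
    by rewrite ler_wpM2l// ltW.
  have -> : (v - M + 1) * (l * f (M - 1) + (1 - l) * f v) =
            (v - M) * f (M - 1) + f v.
    rewrite /l; field; by rewrite gt_eqF.
  move=> h2; rewrite lerBlDr.
  have : f M + s * (v - M) <= f v.
    rewrite /s; move: h2; rewrite mulrDl mul1r => h2.
    have -> : f M + (f M - f (M - 1)) * (v - M) =
      (v - M) * f M + f M - (v - M) * f (M - 1) by ring.
    lra.
  move=> h3; apply: (le_trans h3); by rewrite lerDl.
have [vM1|M1v] := leP v (M - 1).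
  have d1 : 0 < M - v by rewrite subr_gt0.
  pose l := (M - v)^-1.
  have l01 : 0 <= l <= 1.
    apply/andP; split; first by rewrite /l invr_ge0 ltW.
    by rewrite /l invf_le1// lerBrDr addrC -lerBrDr.
  have := cv v M l l01.
  have -> : l * v + (1 - l) * M = M - 1.
    rewrite /l; field; by rewrite gt_eqF.
  move=> h.
  have : (M - v) * f (M - 1) <= (M - v) * (l * f v + (1 - l) * f M).
    by rewrite ler_wpM2l// ltW.
  have -> : (M - v) * (l * f v + (1 - l) * f M) = f v + (M - v - 1) * f M.
    rewrite /l; field; by rewrite gt_eqF.
  move=> h2.
  have : f M + s * (v - M) <= f v.
    rewrite /s.
    have -> : f M + (f M - f (M - 1)) * (v - M) =
       (M - v) * f (M - 1) - (M - v - 1) * f M by ring.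
    by rewrite lerBlDr.
  move=> h3; apply: le_trans h3; by rewrite lerBlDr lerDl.
have : f (M - 1) <= f v by apply: nd; exact: ltW.
apply: le_trans; rewrite /s.
rewrite lerBlDr.
have : (f M - f (M - 1)) * (v - M) <= 0.
  by rewrite mulr_ge0_le0// subr_le0 ltW.
move=> h; have -> : f (M - 1) + (f M - f (M - 1)) = f M by ring.
by rewrite gerDl.
Qed.

End convex_facts.

Section E_facts.
Context {R : realType} {d : measure_display} {T : measurableType d}.
Variable P : probability T R.

Lemma le_E (g h : T -> R) : measurable_fun setT g -> measurable_fun setT h ->
  {ae P, forall w, g w <= h w} -> ('E_P[g] <= 'E_P[h])%E.
Proof.
move=> mg mh gh; rewrite unlock.
rewrite [X in (X <= _)%E]integralE [X in (_ <= X)%E]integralE.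
have mg' : measurable_fun setT (EFin \o g) by exact/measurable_EFinP.
have mh' : measurable_fun setT (EFin \o h) by exact/measurable_EFinP.
apply: leeB.
- apply: ae_ge0_le_integral => //.
  + exact: measurable_funepos.
  + exact: measurable_funepos.
  + apply: filterS gh => w gw _.
    by rewrite !funeposE; apply: le_max2 => //; rewrite lee_fin.
- apply: ae_ge0_le_integral => //.
  + exact: measurable_funeneg.
  + exact: measurable_funeneg.
  + apply: filterS gh => w gw _.
    by rewrite !funenegE; apply: le_max2 => //; rewrite leeN2 lee_fin.
Qed.

End E_facts.
Arguments le_E {R d T P g h}.

Section L2_facts.
Context {R : realType} {d : measure_display} {T : measurableType d}.
Variable P : probability T R.

Lemma L2_Lfun (X : T -> R) : L2 P X -> X \in Lfun P 2%:E.
Proof.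
move=> [mX iX]; rewrite inE; apply/andP; split; first by rewrite inE.
rewrite inE /= /finite_norm unlock /Lnorm; apply: poweR_lty.
have -> : (\int[P]_x `|(EFin \o X) x| `^ 2 = \int[P]_x (X x ^+ 2)%:E)%E.
  apply: eq_integral => x _ /=.
  by rewrite powR_mulrn// real_normK// num_real.
move/integrableP: iX => [_]; apply: le_lt_trans.
have mX2 : measurable_fun setT (fun x => (X x ^+ 2)%:E).
  by apply/measurable_EFinP; exact: measurable_funX.
apply: ge0_le_integral => //.
- by move=> x _; rewrite lee_fin sqr_ge0.
- exact: measurableT_comp.
- by move=> x _; rewrite gee0_abs// lee_fin sqr_ge0.
Qed.

Lemma Lfun_L2 (X : T -> R) : X \in Lfun P 2%:E -> L2 P X.
Proof.
move=> h; split; last exact: Lfun2_integrable_sqr.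
by move: h; rewrite inE => /andP[]; rewrite inE.
Qed.

Lemma L2_Lfun1 (X : T -> R) : L2 P X -> X \in Lfun P 1.
Proof.
by move/L2_Lfun; apply: Lfun_subset12; exact: fin_num_measure.
Qed.

Lemma L2_meas (X : T -> R) : L2 P X -> measurable_fun setT X.
Proof. by case. Qed.

Lemma L2_affine (X : T -> R) a b : L2 P X -> L2 P (fun w => a * X w + b).
Proof.
move/L2_Lfun => h; apply: Lfun_L2.
rewrite (_ : (fun w => _) = (a \o* X) \+ cst b); last first.
  by apply/funext => w /=; rewrite mulrC.
apply: rpredD.
- by rewrite lee_fin ler1n.
- by move=> H; apply: Lfun_scale => //; rewrite ler1n.
- by move=> H; exact: Lfun_cst.
Qed.

Lemma L2_cst a : L2 P (cst a).
Proof. by apply: Lfun_L2; exact: Lfun_cst. Qed.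

Lemma E_affine (X : T -> R) (a b : R) : X \in Lfun P 1 ->
  ('E_P[fun w => (a * X w + b)%R] = (a * fine 'E_P[X] + b)%:E)%E.
Proof.
move=> h.
rewrite (_ : (fun w => _) = (a \o* X) \+ cst b); last first.
  by apply/funext => w /=; rewrite mulrC.
rewrite expectationD ?Lfun_scale ?Lfun_cst// expectationZl// expectation_cst.
by rewrite -(fineK (expectation_fin_num h)) /= EFinD EFinM fineK// expectation_fin_num.
Qed.

End L2_facts.
Arguments L2_Lfun {R d T P X}.
Arguments Lfun_L2 {R d T P X}.
Arguments L2_Lfun1 {R d T P X}.
Arguments L2_meas {R d T P X}.
Arguments L2_affine {R d T P X}.

Section prob_facts.
Context {R : realType} {d : measure_display} {T : measurableType d}.
Variable P : probability T R.

Lemma ae_P1 (A : set T) : measurable A -> {ae P, forall w, A w} -> P A = 1%E.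
Proof.
move=> mA [N [mN PN AN]].
have : P (~` A) = 0%E.
  apply/eqP; rewrite eq_le measure_ge0 andbT -PN; apply: le_measure => //.
  - by rewrite inE; exact: measurableC.
  - by rewrite inE.
rewrite probability_setC// -(fineK (fin_num_measure P _ mA)) -EFinB => -[].
by move/eqP; rewrite subr_eq0 => /eqP <-.
Qed.

Lemma P1_ae (A : set T) : measurable A -> P A = 1%E -> {ae P, forall w, A w}.
Proof.
move=> mA PA; exists (~` A); split => //; first exact: measurableC.
by rewrite probability_setC// PA subee.
Qed.

Lemma meas_le (X : T -> R) y : measurable_fun setT X -> measurable [set w | X w <= y].
Proof.
move=> mX; rewrite (_ : [set w | X w <= y] = setT `&` X @^-1` `]-oo, y]).
  by apply: mX => //; exact: measurable_itv.
by apply/seteqP; split => w /=; rewrite in_itv /=; [move=> ->|move=> [_ ->]].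
Qed.

Lemma meas_gt (X : T -> R) y : measurable_fun setT X -> measurable [set w | y < X w].
Proof.
move=> mX; rewrite (_ : [set w | y < X w] = setT `&` X @^-1` `]y, +oo[).
  by apply: mX => //; exact: measurable_itv.
by apply/seteqP; split => w /=; rewrite in_itv /= andbT; [move=> ->|move=> [_ ->]].
Qed.

End prob_facts.

Section quantile_facts.
Context {R : realType} {d : measure_display} {T : measurableType d}.
Variable P : probability T R.
Variables (X : T -> R) (M : R).
Hypothesis mX : measurable_fun setT X.
Hypothesis XM : {ae P, forall w, `|X w| <= M}.

Let F y := P [set w | X w <= y].
Let Qs (t : R) := [set y : R | (t%:E < F y)%E].

Lemma F_le y y' : y <= y' -> (F y <= F y')%E.
Proof.
move=> yy; apply: le_measure; rewrite ?inE; try exact: meas_le.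
by move=> w /= /le_trans; apply.
Qed.

Lemma F_M : F M = 1%E.
Proof.
apply: ae_P1; first exact: meas_le.
by apply: filterS XM => w h; exact: le_trans (ler_norm _) h.
Qed.

Lemma F_low y : y < - M -> F y = 0%E.
Proof.
move=> yM; move: XM => [N [mN PN XN]].
apply/eqP; rewrite eq_le measure_ge0 andbT -PN; apply: le_measure; rewrite ?inE//.
  exact: meas_le.
move=> w /= Xy; apply: XN => /= h.
have : - M <= X w by rewrite lerNl (le_trans _ h)// -normrN ler_norm.
move=> h2; have := le_lt_trans h2 (le_lt_trans Xy yM); by rewrite ltxx.
Qed.

Lemma Qs_M t : t < 1 -> Qs t M.
Proof. by move=> t1; rewrite /Qs /= F_M lte_fin. Qed.

Lemma Qs_lb t : 0 <= t -> lbound (Qs t) (- M).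
Proof.
move=> t0 y /= ty; rewrite leNgt; apply/negP => /F_low Fy.
by move: ty Fy; rewrite /Qs /F /= => ty Fy; move: ty; rewrite Fy lte_fin ltNge t0.
Qed.

Lemma quantileE t : quantile P X t = inf (Qs t).
Proof. by []. Qed.

Lemma quantile_le t y : 0 <= t -> Qs t y -> quantile P X t <= y.
Proof. by move=> t0 Qy; apply: ge_inf => //; exists (- M); exact: Qs_lb. Qed.

Lemma quantile_ge t y : t < 1 -> (forall y', Qs t y' -> y <= y') -> y <= quantile P X t.
Proof. by move=> t1 h; apply: lb_le_inf => //; exists M; exact: Qs_M. Qed.

Lemma quantile_leM t : 0 <= t < 1 -> quantile P X t <= M.
Proof. by move=> /andP[t0 t1]; apply: quantile_le => //; exact: Qs_M. Qed.

Lemma quantile_nd s t : 0 <= s -> s <= t -> t < 1 ->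
  quantile P X s <= quantile P X t.
Proof.
move=> s0 st t1; apply: quantile_ge => // y /= ty.
apply: quantile_le => //=.
by apply: le_lt_trans ty; rewrite lee_fin.
Qed.

Lemma quantile_cvg : cvg (quantile P X t @[t --> (1:R)^'-]).
Proof.
apply: nondecreasing_at_left_is_cvgr.
- near=> s; move=> x y xs ys xy; move: xs ys.
  move=> /andP[sx x1] /andP[sy y1].
  rewrite bnd_simp in sx x1 sy y1.
  apply: quantile_nd => //.
  apply: (le_trans _ (ltW sx)); apply: ltW.
  near: s; exact: nbhs_left_gt.
- near=> s; exists M => _ [y] /= /andP[sy y1] <-.
  have y1' : y < 1 by move: y1; rewrite bnd_simp.
  have sy' : s < y by move: sy; rewrite bnd_simp.
  apply: quantile_leM; rewrite y1' andbT.
  apply: (le_trans _ (ltW sy')); apply: ltW.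
  near: s; exact: nbhs_left_gt.
Unshelve. all: by end_near. Qed.

Lemma quantile_le1 t : 0 <= t < 1 -> quantile P X t <= quantile1 P X.
Proof.
move=> /andP[t0 t1]; rewrite /quantile1; apply: limr_ge; first exact: quantile_cvg.
near=> s; apply: (quantile_nd t s t0).
  near: s; exact: nbhs_left_ge.
near: s; exact: nbhs_left_lt.
Unshelve. all: by end_near. Qed.

Lemma quantile1_le k : (forall t, 0 <= t < 1 -> quantile P X t <= k) ->
  quantile1 P X <= k.
Proof.
move=> h; rewrite /quantile1; apply: limr_le; first exact: quantile_cvg.
near=> s; apply: h; apply/andP; split.
  near: s; exact: nbhs_left_ge.
near: s; exact: nbhs_left_lt.
Unshelve. all: by end_near. Qed.

Lemma F_le1 y : (F y <= 1)%E.
Proof.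
rewrite -(probability_setT P); apply: le_measure; rewrite ?inE//.
exact: meas_le.
Qed.

Lemma F_Q1eps e : 0 < e -> F (quantile1 P X + e) = 1%E.
Proof.
move=> e0; set y := quantile1 P X + e.
apply/eqP; rewrite eq_le F_le1 /=; rewrite leNgt; apply/negP => Fy1.
have Ffin : F y \is a fin_num by apply: fin_num_measure; exact: meas_le.
set t := fine (F y).
have Fyt : F y = t%:E by rewrite /t fineK.
have t0 : 0 <= t by rewrite -lee_fin -Fyt measure_ge0.
have t1 : t < 1 by rewrite -lte_fin -Fyt.
have : y <= quantile P X t.
  apply: quantile_ge => // y' Qy'; rewrite leNgt; apply/negP => y'y.
  have := F_le y' y (ltW y'y); rewrite Fyt => /(lt_le_trans Qy').
  by rewrite ltxx.
have t01 : 0 <= t < 1 by rewrite t0 t1.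
move/le_trans/(_ (quantile_le1 t t01)).
by rewrite /y gerDl leNgt e0.
Qed.

Lemma ae_le_Q1 e : 0 < e -> {ae P, forall w, X w <= quantile1 P X + e}.
Proof. by move=> e0; apply: P1_ae; [exact: meas_le| exact: F_Q1eps]. Qed.

Lemma Q1_pos_mass k : k < quantile1 P X ->
  exists k', k < k' /\ (0 < P [set w | (k' < X w)%R])%E.
Proof.
move=> kQ; set k' := (k + quantile1 P X) / 2.
have kk' : k < k' by rewrite /k'; lra.
have k'Q : k' < quantile1 P X by rewrite /k'; lra.
have [t [t01 tq]] : exists t, 0 <= t < 1 /\ k' < quantile P X t.
  apply: contrapT => hn.
  have : quantile1 P X <= k'.
    apply: quantile1_le => t t01; rewrite leNgt; apply/negP => h.
    by apply: hn; exists t.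
  by rewrite leNgt k'Q.
exists k'; split => //.
have Fk' : (F k' <= t%:E)%E.
  rewrite leNgt; apply/negP => h.
  have := quantile_le t k' (andP t01).1 h.
  by rewrite leNgt tq.
have -> : [set w | k' < X w] = ~` [set w | X w <= k'].
  by apply/seteqP; split => w /=; rewrite ltNge => /negP.
rewrite probability_setC; last exact: meas_le.
have Ffin : F k' \is a fin_num by apply: fin_num_measure; exact: meas_le.
rewrite -/(F k') -(fineK Ffin) -EFinB lte_fin subr_gt0.
rewrite -lte_fin fineK//; apply: le_lt_trans Fk' _.
by rewrite lte_fin; case/andP: t01.
Qed.

End quantile_facts.

Section ic_more.
Context {R : realType}.

Lemma id_ic : increasing_convex (fun u : R => u).
Proof. by split => // u v l _; rewrite lexx. Qed.

Lemma pos_ic (k : R) : increasing_convex (fun u => Num.max (u - k) 0).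
Proof.
split.
  by move=> u v uv; apply: le_max2 => //; rewrite lerB.
move=> u v l /andP[l0 l1].
have l1' : 0 <= 1 - l by rewrite subr_ge0.
rewrite ge_max; apply/andP; split; last first.
  by rewrite addr_ge0// mulr_ge0// le_max lexx orbT.
apply: (@le_trans _ _ (l * (u - k) + (1 - l) * (v - k))).
  by rewrite le_eqVlt; apply/orP; left; apply/eqP; ring.
by rewrite lerD// ler_wpM2l// le_max lexx.
Qed.

End ic_more.

Section E_more.
Context {R : realType} {d : measure_display} {T : measurableType d}.
Variable P : probability T R.

Lemma bnd_Lfun1 (g : T -> R) C : measurable_fun setT g ->
  {ae P, forall w, `|g w| <= C} -> g \in Lfun P 1.
Proof.
move=> mg gC; apply/Lfun1_integrable; apply/integrableP; split.
  exact/measurable_EFinP.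
apply: (@le_lt_trans _ _ (\int[P]_w (cst `|C|%:E) w))%E.
  apply: ae_ge0_le_integral => //.
  - apply: measurableT_comp => //; exact/measurable_EFinP.
  - by move=> w _; rewrite lee_fin.
  - apply: filterS gC => w gw _ /=; rewrite lee_fin.
    exact: le_trans gw (ler_norm _).
rewrite integral_cst//.
by rewrite ltey_eq fin_numM// fin_num_measure.
Qed.

Lemma E_cst_le (g : T -> R) c : measurable_fun setT g ->
  {ae P, forall w, g w <= c} -> ('E_P[g] <= c%:E)%E.
Proof.
move=> mg gc; rewrite -(expectation_cst P c); by apply: le_E.
Qed.

Lemma E_cst_ge (g : T -> R) c : measurable_fun setT g ->
  {ae P, forall w, c <= g w} -> (c%:E <= 'E_P[g])%E.
Proof.
move=> mg gc; rewrite -(expectation_cst P c); by apply: le_E.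
Qed.

End E_more.

Lemma norm_between {R : realDomainType} (a x b : R) : a <= x -> x <= b ->
  `|x| <= `|a| + `|b|.
Proof.
move=> ax xb; rewrite ler_norml; apply/andP; split.
  have := ler_norm (- a); rewrite normrN => h.
  have := normr_ge0 b; lra.
have := ler_norm b; have := normr_ge0 a; lra.
Qed.

Section icx_facts.
Context {R : realType} {d : measure_display} {T : measurableType d}.
Variable P : probability T R.
Variables (X0 : T -> R) (M : R).
Hypothesis mX0 : measurable_fun setT X0.
Hypothesis XM : {ae P, forall w, `|X0 w| <= M}.
Hypothesis M0 : 0 <= M.

Lemma mcompB f (Y : T -> R) m : increasing_convex f -> measurable_fun setT Y ->
  measurable_fun setT (f \o (Y \- cst m)).
Proof.
move=> fic mY; apply: measurableT_comp; first exact: ic_meas.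
by apply: measurable_funB => //; exact: measurable_cst.
Qed.

Lemma icx_shift (Y : T -> R) z :
  icx_ge P Y (X0 \+ cst z) <-> icx_ge P (Y \- cst z) X0.
Proof.
split => h f fic.
- have gic := ic_comp f 1 (-z) fic ler01.
  have := h _ gic.
  have -> : ((fun u => f (1 * u + - z)) \o (X0 \+ cst z)) = f \o X0.
    by apply/funext => w /=; rewrite mul1r addrK.
  have -> : ((fun u => f (1 * u + - z)) \o Y) = f \o (Y \- cst z).
    by apply/funext => w /=; rewrite mul1r.
  done.
- have gic := ic_comp f 1 z fic ler01.
  have := h _ gic.
  have -> : ((fun u => f (1 * u + z)) \o (Y \- cst z)) = f \o Y.
    by apply/funext => w /=; rewrite mul1r subrK.
  have -> : ((fun u => f (1 * u + z)) \o X0) = f \o (X0 \+ cst z).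
    by apply/funext => w /=; rewrite mul1r.
  done.
Qed.

Lemma ps_ub (Y : T -> R) m : icx_ge P (Y \- cst m) X0 ->
  (m%:E <= beating_perf P X0 Y)%E.
Proof. by move=> h; apply: ereal_sup_ubound; exists m. Qed.

Lemma ps_dn (Y : T -> R) m m' : measurable_fun setT Y ->
  icx_ge P (Y \- cst m) X0 -> m' <= m -> icx_ge P (Y \- cst m') X0.
Proof.
move=> mY h mm f fic; apply: le_trans (h f fic) _.
apply: le_E; try exact: mcompB.
by apply: aeW => w /=; apply: (ic_nd _ fic); rewrite lerD2l lerN2.
Qed.

Lemma attain (Y : T -> R) z : measurable_fun setT Y ->
  (z%:E <= beating_perf P X0 Y)%E -> icx_ge P (Y \- cst z) X0.
Proof.
move=> mY zle f fic.
set K := f (M + 1) - f (- M).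
have K0 : 0 <= K.
  rewrite subr_ge0; apply: (ic_nd _ fic). have := M0. lra.
apply/lee_addgt0Pr => e e0.
set eps := e / (K + 1).
have K1 : 0 < K + 1 by lra.
have eps0 : 0 < eps by rewrite /eps divr_gt0.
have epsK : eps * K <= e.
  rewrite /eps mulrAC ler_pdivrMr// ler_wpM2l ?ltW//; lra.
have : ((z - eps)%:E < beating_perf P X0 Y)%E.
  by apply: lt_le_trans zle; rewrite lte_fin; lra.
move/ereal_sup_gt => [_ [m hm <-]]; rewrite lte_fin => zm.
have [zm'|mz] := leP z m.
  apply: le_trans (ps_dn Y m z mY hm zm' f fic) _.
  by rewrite leeDl// lee_fin ltW.
set dl := z - m.
have dl0 : 0 < dl by rewrite /dl; lra.
have dle : dl < eps by rewrite /dl; lra.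
have gic := ic_comp f 1 (- dl) fic ler01.
set g := fun u => f (1 * u + - dl).
have h1 := hm _ gic.
have eq1 : (g \o (Y \- cst m)) = f \o (Y \- cst z).
  by apply/funext => w /=; rewrite /g; congr (f _); rewrite /dl; ring.
rewrite eq1 in h1.
have mg : measurable_fun setT (g \o X0).
  by apply: measurableT_comp => //; exact: ic_meas.
have gL1 : (g \o X0) \in Lfun P 1.
  apply: (@bnd_Lfun1 _ _ _ _ _ (`|f (- M - dl)| + `|f M|)) => //.
  apply: filterS XM => w /=; rewrite ler_norml => /andP[h2 h3].
  apply: norm_between; apply: (ic_nd _ fic); lra.
have h2 : ('E_P[f \o X0] <= 'E_P[(g \o X0) \+ cst (dl * K)%R])%E.
  apply: le_E.
  - by apply: measurableT_comp => //; exact: ic_meas.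
  - by apply: measurable_funD => //; exact: measurable_cst.
  apply: filterS XM => w /=; rewrite ler_norml => /andP[h2 h3].
  apply: (le_trans (cvx_left f (X0 w) dl fic dl0)).
  rewrite /g mul1r lerD2l; apply: ler_wpM2l; first exact: ltW.
  have hA : f (X0 w + 1) <= f (M + 1) by apply: (ic_nd _ fic); lra.
  have hB : f (- M) <= f (X0 w) by apply: (ic_nd _ fic); lra.
  rewrite /K; lra.
rewrite expectationD in h2; last 2 first.
- exact: gL1.
- exact: Lfun_cst.
rewrite expectation_cst in h2.
apply: (le_trans h2); apply: leeD => //.
rewrite lee_fin; apply: le_trans epsK.
by rewrite ler_wpM2r// ltW.
Qed.

Lemma X0_L1 : X0 \in Lfun P 1.
Proof. exact: (@bnd_Lfun1 _ _ _ P X0 M mX0 XM). Qed.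

Lemma ps_ub_E (Y : T -> R) m : Y \in Lfun P 1 -> icx_ge P (Y \- cst m) X0 ->
  m <= fine 'E_P[Y] - fine 'E_P[X0].
Proof.
move=> YL h; have := h _ id_ic.
rewrite (_ : (fun u => u) \o X0 = X0) // (_ : (fun u => u) \o (Y \- cst m) = Y \- cst m) //.
rewrite expectationB ?Lfun_cst// expectation_cst.
rewrite -(fineK (expectation_fin_num YL)) -(fineK (expectation_fin_num X0_L1)).
rewrite -EFinB lee_fin; lra.
Qed.

Lemma ps_nonempty (Y : T -> R) : Y \in Lfun P 1 ->
  icx_ge P (Y \- cst (fine 'E_P[Y] - M - 1)) X0.
Proof.
move=> YL f fic.
set m := fine 'E_P[Y] - M - 1.
apply: (@le_trans _ _ (f M)%:E).
  apply: E_cst_le; first by apply: measurableT_comp => //; exact: ic_meas.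
  by apply: filterS XM => w /=; rewrite ler_norml => /andP[_ h]; exact: (ic_nd _ fic).
set s := f M - f (M - 1).
set c := f M - s * m - s * M - s.
have : ('E_P[fun w => (s * Y w + c)%R] <= 'E_P[f \o (Y \- cst m)%R])%E.
  apply: le_E.
  - apply: measurable_funD; last exact: measurable_cst.
    apply: measurable_funM; first exact: measurable_cst.
    by move: YL; rewrite inE => /andP[]; rewrite inE.
  - apply: mcompB => //.
    by move: YL; rewrite inE => /andP[]; rewrite inE.
  apply: aeW => w /=.
  have := cvx_lower f M (Y w - m) fic.
  rewrite -/s /c; lra.
rewrite E_affine //; apply: le_trans; rewrite lee_fin /c /m /s.
rewrite le_eqVlt; apply/orP; left; apply/eqP; ring.
Qed.

Lemma const_ps (a : R) :
  icx_ge P (cst a \- cst (a - quantile1 P X0)) X0.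
Proof.
move=> f fic.
set Q1 := quantile1 P X0.
rewrite (_ : f \o (cst a \- cst (a - Q1)) = cst (f Q1)); last first.
  by apply/funext => w /=; congr (f _); ring.
rewrite expectation_cst; apply/lee_addgt0Pr => e e0.
set K := f (Q1 + 1) - f Q1.
have K0 : 0 <= K by rewrite subr_ge0; apply: (ic_nd _ fic); lra.
set eps := e / (K + 1 + e).
have Ke : 0 < K + 1 + e by lra.
have eps0 : 0 < eps by rewrite /eps divr_gt0.
have eps1 : eps <= 1 by rewrite /eps ler_pdivrMr// mul1r; lra.
have epsK : eps * K <= e.
  rewrite /eps mulrAC ler_pdivrMr// ler_wpM2l ?ltW//; lra.
rewrite -EFinD; apply: E_cst_le.
  by apply: measurableT_comp => //; exact: ic_meas.
apply: filterS (@ae_le_Q1 _ _ _ P X0 M mX0 XM eps eps0) => w /= h.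
apply: (le_trans (ic_nd _ fic _ _ h)).
have e01 : 0 <= eps <= 1 by rewrite (ltW eps0) eps1.
have := cvx_right f Q1 eps fic e01.
rewrite -/K; lra.
Qed.

Lemma Q2 (W : T -> R) k : measurable_fun setT W -> icx_ge P W X0 ->
  {ae P, forall w, W w <= k} -> quantile1 P X0 <= k.
Proof.
move=> mW h Wk; rewrite leNgt; apply/negP => kQ.
have [k' [kk' pos]] := @Q1_pos_mass _ _ _ P X0 M mX0 XM k kQ.
set A := [set w | k' < X0 w].
have mA : measurable A by exact: meas_gt.
set f := (fun u => Num.max (u - k) 0)%R.
have fic : increasing_convex f := pos_ic k.
have := h _ fic.
have -> : ('E_P[f \o W] = 0)%E.
  apply/eqP; rewrite eq_le; apply/andP; split.
    apply: E_cst_le; first by apply: measurableT_comp => //; exact: ic_meas fic.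
    by apply: filterS Wk => w /= Wwk; rewrite /f ge_max lexx andbT subr_le0.
  apply: E_cst_ge; first by apply: measurableT_comp => //; exact: ic_meas fic.
  by apply: aeW => w /=; rewrite /f le_max lexx orbT.
have iL : \1_A \in Lfun P 1.
  apply: (@bnd_Lfun1 _ _ _ P _ 1); first exact: measurable_indic.
  by apply: aeW => w; rewrite indicE; case: (w \in A); rewrite ?normr1 ?normr0.
have : ('E_P[fun w => ((k' - k) * \1_A w + 0)%R] <= 'E_P[f \o X0])%E.
  apply: le_E.
  - apply: measurable_funD; last exact: measurable_cst.
    apply: measurable_funM; first exact: measurable_cst.
    exact: measurable_indic.
  - by apply: measurableT_comp => //; exact: ic_meas fic.
  apply: aeW => w /=; rewrite indicE addr0 /f.
  case: (boolP (w \in A)) => wA; rewrite ?mulr1 ?mulr0 le_max ?lexx ?orbT//.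
  rewrite lerB//; apply: ltW.
  by move: wA; rewrite inE.
rewrite E_affine // expectation_indic // => h1 h2.
have := le_trans h1 h2; rewrite addr0 lee_fin leNgt => /negP; apply.
apply: mulr_gt0; first by rewrite subr_gt0.
have PAfin : P A \is a fin_num by exact: fin_num_measure.
by rewrite -lte_fin fineK.
Qed.

End icx_facts.

Section var_facts.
Context {R : realType} {d : measure_display} {T : measurableType d}.
Variable P : probability T R.

Lemma ae_false : ~ {ae P, forall w : T, False}.
Proof.
move=> [N [mN PN sub]].
have : (P setT <= P N)%E.
  by apply: le_measure; rewrite ?inE//; move=> w _; apply: sub.
by rewrite PN probability_setT lee_fin ler10.
Qed.

Lemma ae_and (A B : T -> Prop) : {ae P, forall w, A w} -> {ae P, forall w, B w} ->
  {ae P, forall w, A w /\ B w}.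
Proof. by move=> hA hB; apply: filterS2 hA hB => w. Qed.

Lemma abs_E0 (g : T -> R) : measurable_fun setT g ->
  ('E_P[fun w => `|g w|%R] = 0)%E -> {ae P, forall w, g w = 0}.
Proof.
move=> mg; rewrite unlock => h.
have : (\int[P]_x `|(EFin \o g) x| = 0)%E.
  by rewrite -h; apply: eq_integral => w _ /=.
have mg2 : measurable_fun setT (EFin \o g) by exact/measurable_EFinP.
move/(ae_eq_integral_abs _ measurableT mg2).
by apply: filterS => w /(_ I) /= [].
Qed.

Lemma Var0_const (Y : T -> R) : L2 P Y -> 'V_P[Y] = 0%E ->
  {ae P, forall w, Y w = fine 'E_P[Y]}.
Proof.
move=> YL V0.
set c := fine 'E_P[Y].
have mY := L2_meas YL.
have mg : measurable_fun setT (fun w => Y w - c).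
  by apply: measurable_funB => //; exact: measurable_cst.
have : ('E_P[fun w => `|(Y w - c) * (Y w - c)|%R] = 0)%E.
  rewrite -V0 /variance covariance.unlock.
  congr expectation; apply/funext => w /=.
  by rewrite ger0_norm // -expr2 sqr_ge0.
move/abs_E0 => h.
have : {ae P, forall w, (Y w - c) * (Y w - c) = 0}.
  apply: h; exact: measurable_funM.
by apply: filterS => w /eqP; rewrite mulf_eq0 orbb subr_eq0 => /eqP.
Qed.

Lemma Var_affine (Y : T -> R) (l c : R) : L2 P Y ->
  'V_P[fun w => l * Y w + c] = ((l ^+ 2)%:E * 'V_P[Y])%E.
Proof.
move=> /L2_Lfun YL.
rewrite (_ : (fun w => _) = (l \o* Y) \+ cst c); last first.
  by apply/funext => w /=; rewrite mulrC.
rewrite varianceD_cst_r ?varianceZ//.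
by apply: Lfun_scale => //; rewrite ler1n.
Qed.

Lemma Erho_pos (rho : T -> R) : L2 P rho -> P [set w | 0 < rho w] = 1%E ->
  0 < fine 'E_P[rho].
Proof.
move=> rL rpos.
have mr := L2_meas rL.
have rfin := expectation_fin_num (L2_Lfun1 rL).
have aepos : {ae P, forall w, 0 < rho w}.
  by apply: P1_ae => //; exact: meas_gt.
have Ege : (0%:E <= 'E_P[rho])%E.
  apply: E_cst_ge => //; apply: filterS aepos => w; exact: ltW.
rewrite lt_def fine_ge0 // andbT; apply/negP => /eqP E0.
have mabs : measurable_fun setT (fun w => `|rho w|).
  exact: measurableT_comp.
have : ('E_P[fun w => `|rho w|%R] = 0)%E.
  apply/eqP; rewrite eq_le; apply/andP; split.
    apply: (@le_trans _ _ ('E_P[rho])%E); last by rewrite -(fineK rfin) E0.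
    apply: le_E => //.
    by apply: filterS aepos => w /= /ltW /ger0_norm ->.
  by apply: E_cst_ge => //; apply: aeW => w; exact: normr_ge0.
move/(abs_E0 _ mr) => h0.
apply: ae_false; apply: filterS2 aepos h0 => w h1 h2.
by move: h1; rewrite h2 ltxx.
Qed.

End var_facts.

Theorem proposition8p1 (R : realType) (d : measure_display) (T : measurableType d)
    (P : probability T R) (rho X0 : T -> R) (x : R)
    (HPcomplete : measure_is_complete P)
    (HPnonatomic : nonatomic P)
    (Hrho2 : L2 P rho)
    (Hrhopos : P [set w | 0 < rho w] = 1%E)
    (Hrhovar : (0 < 'V_P[rho])%E)
    (HX0 : Linfty P X0)
    (Xstar : T -> R) :
  BPV_efficient P rho x X0 Xstar <->
  exists z : R, x / fine 'E_P[rho] - quantile1 P X0 <= z /\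
    variance_minimal P (budget_icx P rho x (X0 \+ cst z)) Xstar.
Proof.
case: HX0 => mX0 [M1 XM1].
set M := `|M1|.
have XM : {ae P, forall w, `|X0 w| <= M}.
  by apply: filterS XM1 => w h; apply: le_trans h (ler_norm _).
have M0 : 0 <= M := normr_ge0 _.
have mr := L2_meas Hrho2.
have rL1 := L2_Lfun1 Hrho2.
have rfin := expectation_fin_num rL1.
set e := fine 'E_P[rho].
have e0 : 0 < e := Erho_pos P rho Hrho2 Hrhopos.
have Ee : ('E_P[rho] = e%:E)%E by rewrite /e fineK.
set Q1 := quantile1 P X0.
have cost_cst : forall a, ('E_P[(rho \* cst a)%R] = (a * e)%:E)%E.
  move=> a; rewrite (_ : rho \* cst a = fun w => a * rho w + 0).
    by rewrite E_affine // addr0.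
  by apply/funext => w /=; rewrite addr0 mulrC.
split.
- move=> [[XL2 Xcost] noY].
  have XL1 := L2_Lfun1 XL2.
  have mXs := L2_meas XL2.
  set psi := beating_perf P X0 Xstar.
  have pub : (psi <= (fine 'E_P[Xstar] - fine 'E_P[X0])%:E)%E.
    apply: ge_ereal_sup => _ [m hm <-]; rewrite lee_fin.
    exact: (ps_ub_E P X0 M mX0 XM Xstar m XL1 hm).
  have plb := ps_ub P X0 Xstar _ (ps_nonempty P X0 M mX0 XM Xstar XL1).
  have pfin : psi \is a fin_num.
    by rewrite fin_numElt (lt_le_trans _ plb) ?ltNyr // (le_lt_trans pub) ?ltry.
  set z := fine psi.
  have pz : psi = z%:E by rewrite /z fineK.
  have pz' : beating_perf P X0 Xstar = z%:E := pz.
  have Xz : icx_ge P (Xstar \- cst z) X0.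
    by apply: (attain P X0 M mX0 XM M0) => //; rewrite /z fineK.
  exists z; split.
  + rewrite leNgt; apply/negP => zlt.
    have cps := ps_ub P X0 (cst (x / e)) _ (const_ps P X0 M mX0 XM (x / e)).
    apply: noY; exists (cst (x / e)); split.
    * split; first exact: L2_cst.
      by rewrite cost_cst divfK ?gt_eqF.
    * by apply: le_trans cps; rewrite pz' lee_fin ltW.
    * by rewrite variance_cst variance_ge0.
    * by left; apply: lt_le_trans cps; rewrite pz' lte_fin.
  + split.
    * split; first exact: XL2.
      split; first exact: Xcost.
      exact/icx_shift.
    * move=> Y [YL2 [Ycost Yicx]]; rewrite leNgt; apply/negP => VY.
      apply: noY; exists Y; split => //.
      - by rewrite pz'; apply: ps_ub; exact/icx_shift.
      - exact: ltW.
      - by right.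
- move=> [z [thr [[XL2 [Xcost Xicx]] Xmin]]].
  split; first by split.
  move=> [Y [[YL2 Ycost] ple Vle strict]].
  have mY := L2_meas YL2.
  have zps : (z%:E <= beating_perf P X0 Xstar)%E.
    by apply: ps_ub; exact/icx_shift.
  have YS : icx_ge P (Y \- cst z) X0.
    by apply: (attain P X0 M mX0 XM M0) => //; exact: le_trans zps ple.
  have VXY : ('V_P[Xstar] <= 'V_P[Y])%E.
    by apply: Xmin; split => //; split => //; apply/icx_shift.
  case: strict => [plt|Vlt]; last by move: (lt_le_trans Vlt VXY); rewrite ltxx.
  have : (z%:E < beating_perf P X0 Y)%E by exact: le_lt_trans zps plt.
  move/ereal_sup_gt => [_ [m hm <-]]; rewrite lte_fin => zm.
  have YLf := L2_Lfun YL2.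
  have Vfin := variance_fin_num YLf.
  set v := fine 'V_P[Y].
  have Vv : ('V_P[Y] = v%:E)%E by rewrite /v fineK.
  have v0 : 0 <= v by rewrite -lee_fin -Vv variance_ge0.
  have [vz|vp] : v = 0 \/ 0 < v.
    by move: v0; rewrite le_eqVlt => /orP[/eqP<-|]; [left|right].
  + have Yc := Var0_const P Y YL2 (etrans Vv (congr1 _ vz)).
    set c := fine 'E_P[Y].
    have rY : ('E_P[(rho \* Y)%R] = (c * e)%:E)%E.
      rewrite -cost_cst; apply/eqP; rewrite eq_le; apply/andP; split; apply: le_E.
      - exact: measurable_funM.
      - by apply: measurable_funM => //; exact: measurable_cst.
      - by apply: filterS Yc => w /= ->.
      - by apply: measurable_funM => //; exact: measurable_cst.
      - exact: measurable_funM.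
      - by apply: filterS Yc => w /= ->.
    have ce : c <= x / e.
      by rewrite ler_pdivlMr //; move: Ycost; rewrite rY lee_fin.
    have Qle : Q1 <= c - m.
      apply: (Q2 P X0 M mX0 XM (Y \- cst m)) => //.
      - by apply: measurable_funB => //; exact: measurable_cst.
      - by apply: filterS Yc => w /= ->.
    move: thr; rewrite -/Q1; lra.
  + set mu := fine 'E_P[Y].
    set a := x / e.
    have ae_ : a * e = x by rewrite /a divfK ?gt_eqF.
    set mn := Num.min mu a.
    have mnl : - `|mu| - `|a| <= mn.
      rewrite /mn le_min; apply/andP; split.
        have := ler_norm (- mu); rewrite normrN; have := normr_ge0 a; lra.
      have := ler_norm (- a); rewrite normrN; have := normr_ge0 mu; lra.
    have mna : mn <= a by rewrite /mn ge_min lexx orbT.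
    set B := `|m| + `|mu| + `|a| + M + 1.
    have B0 : 0 < B.
      have := normr_ge0 m; have := normr_ge0 mu; have := normr_ge0 a; rewrite /B; lra.
    have mnB : m - mn + M <= B.
      have := ler_norm m; rewrite /B; lra.
    set D := m - z + B.
    have D0 : 0 < D by rewrite /D; lra.
    set l := (m - z) / D.
    have l0 : 0 < l by rewrite /l divr_gt0 // subr_gt0.
    have l1 : l < 1 by rewrite /l ltr_pdivrMr // mul1r /D; lra.
    have lB : l * B <= m - z.
      rewrite /l mulrAC ler_pdivrMr //; apply: ler_wpM2l.
        by rewrite subr_ge0; exact: ltW.
      rewrite /D; lra.
    have key : l * (m - mn + M) <= m - z.
      apply: le_trans lB; apply: ler_wpM2l => //; exact: ltW.
    set lam := 1 - l.
    have lam0 : 0 < lam by rewrite /lam; lra.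
    set Y' := fun w => lam * Y w + l * mn.
    have Y'L2 : L2 P Y' := L2_affine lam (l * mn) YL2.
    have Vlt : ('V_P[Y'] < 'V_P[Y])%E.
      rewrite Var_affine // Vv -EFinM lte_fin.
      have lam1 : lam < 1 by rewrite /lam; lra.
      have : lam ^+ 2 < 1 by rewrite expr2; nra.
      nra.
    have rYL := Lfun2_mul_Lfun1 (L2_Lfun Hrho2) YLf.
    have rYfin := expectation_fin_num rYL.
    have Y'cost : ('E_P[(rho \* Y')%R] <= x%:E)%E.
      rewrite (_ : (rho \* Y')%R = (lam \o* (rho \* Y)) \+ ((l * mn) \o* rho))%R; last first.
        by apply/funext => w /=; rewrite /Y'; ring.
      rewrite expectationD ?Lfun_scale // expectationZl // expectationZl // Ee.
      move: Ycost; rewrite -(fineK rYfin); set r := fine _; rewrite !lee_fin => rx.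
      have h1 : lam * r <= lam * x by apply: ler_wpM2l => //; exact: ltW.
      have h2 : l * mn * e <= l * a * e.
        apply: ler_wpM2r; first exact: ltW.
        by apply: ler_wpM2l => //; exact: ltW.
      have h3 : l * a * e = l * x by rewrite -mulrA ae_.
      have h5 : lam * x + l * x = x by rewrite /lam; ring.
      lra.
    have Y'icx : icx_ge P (Y' \- cst z) X0.
      move=> f fic.
      set c' := lam * m + l * mn - z.
      have gic := ic_comp f lam c' fic (ltW lam0).
      have h1 := hm _ gic.
      have eq1 : ((fun u => f (lam * u + c')) \o (Y \- cst m)) = f \o (Y' \- cst z).
        by apply/funext => w /=; congr (f _); rewrite /c' /Y'; ring.
      rewrite eq1 in h1; apply: le_trans h1.
      apply: le_E.
      - by apply: measurableT_comp => //; exact: ic_meas.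
      - by apply: measurableT_comp => //; exact: ic_meas.
      apply: filterS XM => w /=; rewrite ler_norml => /andP[h2 h3].
      apply: (ic_nd _ fic).
      have h4 : l * X0 w <= l * M by apply: ler_wpM2l => //; exact: ltW.
      rewrite /c' /lam; lra.
    have := Xmin Y' (conj Y'L2 (conj Y'cost ((icx_shift P X0 Y' z).2 Y'icx))).
    move=> h; have := lt_le_trans Vlt (le_trans Vle h); by rewrite ltxx.
Qed.
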